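(* Let $\mathfrak{H}$ be a complete Heyting algebra and define its point-free coderivative by $\divideontimes \mathsf{h} := \bigwedge_{\mathsf{i}\in\mathfrak{H}}(\mathsf{i}\vee(\mathsf{i}\to\mathsf{h}))$. Then $\divideontimes$ is an $\mathsf{mHC}$-operator, i.e. $\divideontimes\top=\top$, $\divideontimes(a\wedge b)=\divideontimes a\wedge\divideontimes b$, $a\le\divideontimes a$, and $\divideontimes a\le b\vee(b\to a)$ for all $a,b\in\mathfrak{H}$. *)

(* Defs.v *)
From HB Require Import structures.
From mathcomp Require Import all_boot all_order.
Set Implicit Arguments. Unset Strict Implicit. Unset Printing Implicit Defensive.
Import Order.TTheory.
Local Open Scope order_scope.

(* All operations are specified by their universal properties, hence are
   uniquely determined by the order. *)
Record completeHeyting (d : Order.disp_t) (T : porderType d) := CompleteHeyting {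
  cinf : (T -> Prop) -> T;
  cmeet : T -> T -> T;
  cjoin : T -> T -> T;
  cimp : T -> T -> T;
  ctop : T;
  cinf_lb : forall (S : T -> Prop) x, S x -> cinf S <= x;
  cinf_glb : forall (S : T -> Prop) y, (forall x, S x -> y <= x) -> y <= cinf S;
  cmeet_glb : forall a b x, (x <= cmeet a b) = (x <= a) && (x <= b);
  cjoin_lub : forall a b x, (cjoin a b <= x) = (a <= x) && (b <= x);
  ctop_max : forall x, x <= ctop;
  cimp_adj : forall a b x, (cmeet x a <= b) = (x <= cimp a b)
}.

Definition coderiv d (T : porderType d) (H : completeHeyting T) (h : T) : T :=
  cinf H (fun x => exists i : T, x = cjoin H i (cimp H i h)).

(* Main.v *)
Require Import Defs.
From HB Require Import structures.
From mathcomp Require Import all_boot all_order.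
Local Open Scope order_scope.
Import Order.TTheory.

Section Aux.
Variables (d : Order.disp_t) (T : porderType d) (H : completeHeyting T).
Local Notation M := (cmeet H).
Local Notation J := (cjoin H).
Local Notation I := (cimp H).

Lemma mle1 a b : M a b <= a.
Proof. by have := cmeet_glb H a b (M a b); rewrite lexx => /esym/andP []. Qed.
Lemma mle2 a b : M a b <= b.
Proof. by have := cmeet_glb H a b (M a b); rewrite lexx => /esym/andP []. Qed.
Lemma jge1 a b : a <= J a b.
Proof. by have := cjoin_lub H a b (J a b); rewrite lexx => /esym/andP []. Qed.
Lemma jge2 a b : b <= J a b.
Proof. by have := cjoin_lub H a b (J a b); rewrite lexx => /esym/andP []. Qed.
Lemma mglb a b x : x <= a -> x <= b -> x <= M a b.
Proof. by move=> h1 h2; rewrite cmeet_glb h1 h2. Qed.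
Lemma jlub a b x : a <= x -> b <= x -> J a b <= x.
Proof. by move=> h1 h2; rewrite cjoin_lub h1 h2. Qed.
Lemma mC a b : M a b <= M b a.
Proof. by apply: mglb; [apply: mle2|apply: mle1]. Qed.
Lemma adj a b x : M x a <= b -> x <= I a b.
Proof. by rewrite cimp_adj. Qed.
Lemma adj' a b x : x <= I a b -> M x a <= b.
Proof. by rewrite cimp_adj. Qed.
Lemma mp a b : M (I a b) a <= b.
Proof. exact: adj'. Qed.

Lemma distr i p q : M (J i p) (J i q) <= J i (M p q).
Proof.
apply: adj'; apply: jlub.
  apply: adj; apply: le_trans (mle1 _ _) (jge1 _ _).
apply: adj; apply: le_trans (mC _ _) _; apply: adj'; apply: jlub.
  apply: adj; apply: le_trans (mle1 _ _) (jge1 _ _).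
apply: adj; apply: le_trans (mC _ _) (jge2 _ _).
Qed.

Lemma impM i a b : M (I i a) (I i b) <= I i (M a b).
Proof.
apply: adj; apply: mglb.
  apply: le_trans (mp i a); apply: mglb; last exact: mle2.
  apply: le_trans (mle1 _ _) (mle1 _ _).
apply: le_trans (mp i b); apply: mglb; last exact: mle2.
apply: le_trans (mle1 _ _) (mle2 _ _).
Qed.

Lemma cd_lb h i : coderiv H h <= J i (I i h).
Proof. by apply: cinf_lb; exists i. Qed.

Lemma cd_glb h y : (forall i, y <= J i (I i h)) -> y <= coderiv H h.
Proof. by move=> hy; apply: cinf_glb => x [i ->]. Qed.

Lemma cd_mono a b : a <= b -> coderiv H a <= coderiv H b.
Proof.
move=> ab; apply: cd_glb => i; apply: le_trans (cd_lb a i) _.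
apply: jlub; first exact: jge1.
apply: le_trans (jge2 _ _); apply: adj; apply: le_trans (mp i a) ab.
Qed.
End Aux.

Theorem proposition4p3 (d : Order.disp_t) (T : porderType d)
    (H : completeHeyting T) :
  coderiv H (ctop H) = ctop H /\
  (forall a b : T, coderiv H (cmeet H a b) = cmeet H (coderiv H a) (coderiv H b)) /\
  (forall a : T, a <= coderiv H a) /\
  (forall a b : T, coderiv H a <= cjoin H b (cimp H b a)).
Proof.
have le_cd : forall a : T, a <= coderiv H a.
  move=> a; apply: cd_glb => i; apply: (le_trans _ (@jge2 _ _ H _ _)).
  by apply: adj; apply: mle1.
split; first by apply/le_anti/andP; split; [apply: ctop_max|apply: le_cd].
split; last by split=> // a b; apply: cd_lb.
move=> a b; apply/le_anti/andP; split.
  by apply: mglb; apply: cd_mono; [apply: mle1|apply: mle2].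
apply: cd_glb => i.
apply: (@le_trans _ _ (cmeet H (cjoin H i (cimp H i a)) (cjoin H i (cimp H i b)))).
  by apply: mglb; [apply: le_trans (@mle1 _ _ H _ _) (@cd_lb _ _ H _ i)|apply: le_trans (@mle2 _ _ H _ _) (@cd_lb _ _ H _ i)].
apply: le_trans (@distr _ _ H i _ _) _.
apply: jlub; first exact: jge1.
apply: (le_trans _ (@jge2 _ _ H _ _)); exact: impM.
Qed.
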